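(* Let $\mathbb A_1,\mathbb A_2\in\mathcal K$, let $R$ be a subdirect product of $\mathbb A_1\times\mathbb A_2$, and let $B,C$ be maximal components (respectively as-components, u-maximal components) of $\mathbb A_1,\mathbb A_2$ such that $B\times C\subseteq R$. Then $B\times C$ is a maximal component (respectively as-component, u-maximal component) of $R$.
   Context: All algebras are finite and idempotent; $\mathrm{Sg}(B)$ denotes the subalgebra generated by a set $B$. Edges: for elements $a,b$ of an algebra $\mathbb A$ let $\mathbb B=\mathrm{Sg}(a,b)$. The pair $ab$ is an edge if there is a maximal congruence $\theta$ of $\mathbb B$ such that either $\mathbb B/\theta$ is a set (unary type), or $\mathbb B/\theta$ is term equivalent to the full idempotent reduct of a module and some term operation $f$ induces on $\mathbb B/\theta$ the affine operation $x-y+z$ (affine type), or some term operation $f$ with $f/\theta$ a semilattice operation on $\{a/\theta,b/\theta\}$, or one with $f/\theta$ a majority operation on $\{a/\theta,b/\theta\}$. Semilattice type: the semilattice option holds for some $\theta$; majority type: not semilattice type and the majority option holds for some $\theta$; $\{a/\theta,b/\theta\}$ is a thick edge. $\mathbb A$ is smooth if for every edge $ab$ of semilattice or majority type with witness $\theta$, $a/\theta\cup b/\theta$ is a subalgebra. Standing assumption: $\mathcal K$ is a fixed finite class of similar smooth idempotent algebras, closed under subalgebras and homomorphic images, with no edges of unary type; term operations act coordinatewise on products, and all notions below are taken with respect to $\mathcal K$. Fixed binary term $\cdot$: semilattice operation on every thick semilattice edge of every algebra in $\mathcal K$, and for all $a,b$ either $a\cdot b=a$ or $(a,a\cdot b)$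 is a thin semilattice edge. A thin semilattice edge is a pair $ab$ with $a\cdot b=b\cdot a=b$. A ternary term $g'$ satisfies the majority condition if $g'(x,g'(x,y,y),g'(x,y,y))=g'(x,y,y)$ in $\mathcal K$ and $g'$ is a majority operation on every thick majority edge of every algebra in $\mathcal K$. A ternary term $h'$ satisfies the minority condition if $h'(h'(x,y,y),y,y)=h'(x,y,y)$ in $\mathcal K$ and $h'$ induces the affine operation on $\mathrm{Sg}(a,b)/\theta$ for every affine edge $ab$ with witness $\theta$; such an $h$ is fixed. A (directed) pair $ab$ is a thin majority edge if for every $g'$ satisfying the majority condition each of $\mathrm{Sg}(a,g'(a,b,b))$, $\mathrm{Sg}(a,g'(b,a,b))$, $\mathrm{Sg}(a,g'(b,b,a))$ contains $b$. A pair $ab$ is a thin affine edge if $h(b,a,a)=b$ and $b\in\mathrm{Sg}(a,h'(a,a,b))$ for every $h'$ satisfying the minority condition. A path is a sequence $a_0,\dots,a_k$ where each $a_{i-1}a_i$ is a thin edge; it is an s-path if all are thin semilattice edges, an as-path if all are thin semilattice or thin affine edges, an asm-path in general. $a\sqsubseteq b$, $a\sqsubseteq^{as}b$, $a\sqsubseteq^{asm}b$ mean there is an s-, as-, asm-path from $a$ to $b$. $a$ is maximal (as-maximal, u-maximal) if $a\sqsubseteq b$ implies $b\sqsubseteq a$ (resp. the same with $\sqsubseteq^{as}$, $\sqsubseteq^{asm}$). A maximal component (as-component, u-maximal component) is the strongly connected component of a maximal (as-maximal, u-maximal) element in the digraph of thin semilattice edges (resp. thin semilattice and affine edges; all thin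 edges). *)

(* Defs.v *)
From HB Require Import structures.
From mathcomp Require Import all_boot all_order all_algebra.
Set Implicit Arguments. Unset Strict Implicit. Unset Printing Implicit Defensive.
Import GRing.Theory.
Local Open Scope ring_scope.

Record signature := Signature { symb : Type; ar : symb -> nat }.

Section Alg.
Variable L : signature.

Record alg := Alg { carrier :> finType;
                    op : forall f : symb L, ('I_(ar f) -> carrier) -> carrier }.

Inductive term (V : Type) : Type :=
| Var : V -> term V
| App : forall f : symb L, ('I_(ar f) -> term V) -> term V.

Fixpoint teval (A : alg) (V : Type) (e : V -> A) (t : term V) : A :=
  match t with
  | Var v => e v
  | App f ts => @op A f (fun i => teval e (ts i))
  end.

Definition bin (A : alg) (t : term 'I_2) (x y : A) : A :=
  teval (fun i : 'I_2 => if val i == 0%N then x else y) t.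
Definition ter (A : alg) (t : term 'I_3) (x y z : A) : A :=
  teval (fun i : 'I_3 => nth x [:: x; y; z] (val i)) t.

Definition idempotent (A : alg) : Prop :=
  forall (f : symb L) (x : A), @op A f (fun _ => x) = x.

Definition hom (A B : alg) (h : A -> B) : Prop :=
  forall f (x : 'I_(ar f) -> A), h (@op A f x) = @op B f (fun i => h (x i)).
Definition iso (A B : alg) : Prop :=
  exists h : A -> B, hom h /\ bijective h.

Definition closedP (A : alg) (S : A -> Prop) : Prop :=
  forall f (x : 'I_(ar f) -> A), (forall i, S (x i)) -> S (@op A f x).
Definition subuniv (A : alg) (S : {set A}) : Prop := closedP (fun x => x \in S).

Definition Sg (A : alg) (X : A -> Prop) : A -> Prop :=
  fun x => forall S : {set A}, subuniv S -> (forall y, X y -> y \in S) -> x \in S.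
Definition Sg2 (A : alg) (a b : A) : A -> Prop := Sg (fun x => x = a \/ x = b).

Definition prod_alg (A1 A2 : alg) : alg :=
  @Alg (A1 * A2)%type
    (fun f x => (@op A1 f (fun i => (x i).1), @op A2 f (fun i => (x i).2))).

Definition subalg (A : alg) (S : {set A}) (hS : subuniv S) : alg :=
  @Alg {x : A | x \in S}
    (fun f x => exist _ (@op A f (fun i => val (x i))) (hS f _ (fun i => valP (x i)))).

Definition cong (A : alg) (S : A -> Prop) (th : A -> A -> Prop) : Prop :=
  [/\ forall x y, th x y -> S x /\ S y,
      forall x, S x -> th x x,
      forall x y, th x y -> th y x,
      forall x y z, th x y -> th y z -> th x z &
      forall f (x y : 'I_(ar f) -> A),
        (forall i, S (x i) /\ S (y i) /\ th (x i) (y i)) -> th (@op A f x) (@op A f y)].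

Definition maxcong (A : alg) (S : A -> Prop) (th : A -> A -> Prop) : Prop :=
  [/\ cong S th,
      exists x y, [/\ S x, S y & ~ th x y] &
      forall th', cong S th' -> (forall x y, th x y -> th' x y) ->
        (forall x y, th' x y -> th x y) \/ (forall x y, S x -> S y -> th' x y)].

(* S/th is a set: every term operation is a projection modulo th *)
Definition set_quot (A : alg) (S : A -> Prop) (th : A -> A -> Prop) : Prop :=
  forall (n : nat) (t : term 'I_n), exists i : 'I_n,
    forall e : 'I_n -> A, (forall j, S (e j)) -> th (teval e t) (e i).

(* S/th is term equivalent to the full idempotent reduct of a module (via phi),
   and the ternary operation F induces x - y + z on S/th *)
Definition affine_via (A : alg) (S : A -> Prop) (th : A -> A -> Prop)
  (F : A -> A -> A -> A) : Prop :=
  exists (R : nzRingType) (M : lmodType R) (phi : A -> M),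
  [/\ forall x y, S x -> S y -> (th x y <-> phi x = phi y),
      forall m : M, exists x, S x /\ phi x = m,
      forall (n : nat) (t : term 'I_n), exists r : 'I_n -> R,
        \sum_i r i = 1 /\
        forall e : 'I_n -> A, (forall j, S (e j)) ->
          phi (teval e t) = \sum_i r i *: phi (e i),
      forall (n : nat) (r : 'I_n -> R), \sum_i r i = 1 ->
        exists t : term 'I_n, forall e : 'I_n -> A, (forall j, S (e j)) ->
          phi (teval e t) = \sum_i r i *: phi (e i) &
      forall x y z, S x -> S y -> S z -> phi (F x y z) = phi x - phi y + phi z].

Definition semilat_on (A : alg) (th : A -> A -> Prop) (F : A -> A -> A) (a b : A) : Prop :=
  let P := fun u => u = a \/ u = b in
  [/\ forall x y, P x -> P y -> th (F x y) a \/ th (F x y) b,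
      forall x, P x -> th (F x x) x,
      forall x y, P x -> P y -> th (F x y) (F y x) &
      forall x y z, P x -> P y -> P z -> th (F (F x y) z) (F x (F y z))].

Definition majority_on (A : alg) (th : A -> A -> Prop) (M : A -> A -> A -> A) (a b : A) : Prop :=
  let P := fun u => u = a \/ u = b in
  forall x y, P x -> P y ->
    [/\ th (M x x y) x, th (M x y x) x & th (M y x x) x].

Definition unary_opt (A : alg) (a b : A) th := set_quot (Sg2 a b) th.
Definition affine_opt (A : alg) (a b : A) th :=
  exists f : term 'I_3, affine_via (Sg2 a b) th (ter f).
Definition semilat_opt (A : alg) (a b : A) th :=
  exists f : term 'I_2, semilat_on th (bin f) a b.
Definition majority_opt (A : alg) (a b : A) th :=
  exists f : term 'I_3, majority_on th (ter f) a b.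

Definition edge (A : alg) (a b : A) : Prop :=
  exists th, maxcong (Sg2 a b) th /\
    [\/ unary_opt a b th, affine_opt a b th, semilat_opt a b th | majority_opt a b th].

Definition unary_type (A : alg) (a b : A) : Prop :=
  exists th, maxcong (Sg2 a b) th /\ unary_opt a b th.
Definition semilat_type (A : alg) (a b : A) : Prop :=
  exists th, maxcong (Sg2 a b) th /\ semilat_opt a b th.
Definition majority_type (A : alg) (a b : A) : Prop :=
  ~ semilat_type a b /\ exists th, maxcong (Sg2 a b) th /\ majority_opt a b th.

Definition semilat_witness (A : alg) (a b : A) th :=
  maxcong (Sg2 a b) th /\ semilat_opt a b th.
Definition majority_witness (A : alg) (a b : A) th :=
  [/\ majority_type a b, maxcong (Sg2 a b) th & majority_opt a b th].
Definition affine_witness (A : alg) (a b : A) th :=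
  maxcong (Sg2 a b) th /\ affine_opt a b th.

Definition smooth (A : alg) : Prop :=
  forall (a b : A) th, semilat_witness a b th \/ majority_witness a b th ->
    closedP (fun x => Sg2 a b x /\ (th x a \/ th x b)).

Definition finite_class (K : alg -> Prop) : Prop :=
  exists (n : nat) (F : 'I_n -> alg), forall A, K A -> exists i, iso A (F i).

Definition standing (K : alg -> Prop) : Prop :=
  [/\ finite_class K,
      forall A, K A -> [/\ idempotent A, smooth A & forall a b : A, ~ unary_type a b],
      forall (A B : alg) (h : B -> A), K A -> hom h -> injective h -> K B &
      forall (A B : alg) (h : A -> B), K A -> hom h -> (forall y, exists x, h x = y) -> K B].

Definition dot_term (K : alg -> Prop) (dot : term 'I_2) : Prop :=
  (forall A, K A -> forall (a b : A) th, semilat_witness a b th ->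
      semilat_on th (bin dot) a b) /\
  (forall A, K A -> forall a b : A,
      bin dot a b = a \/
      (bin dot a (bin dot a b) = bin dot a b /\ bin dot (bin dot a b) a = bin dot a b)).

Definition majority_cond (K : alg -> Prop) (g : term 'I_3) : Prop :=
  (forall A, K A -> forall x y : A, ter g x (ter g x y y) (ter g x y y) = ter g x y y) /\
  (forall A, K A -> forall (a b : A) th, majority_witness a b th ->
      majority_on th (ter g) a b).

Definition minority_cond (K : alg -> Prop) (h : term 'I_3) : Prop :=
  (forall A, K A -> forall x y : A, ter h (ter h x y y) y y = ter h x y y) /\
  (forall A, K A -> forall (a b : A) th, affine_witness a b th ->
      affine_via (Sg2 a b) th (ter h)).

Definition thin_s (dot : term 'I_2) (A : alg) (a b : A) : Prop :=
  bin dot a b = b /\ bin dot b a = b.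

Definition thin_m (K : alg -> Prop) (A : alg) (a b : A) : Prop :=
  forall g, majority_cond K g ->
    [/\ Sg2 a (ter g a b b) b, Sg2 a (ter g b a b) b & Sg2 a (ter g b b a) b].

Definition thin_a (K : alg -> Prop) (h : term 'I_3) (A : alg) (a b : A) : Prop :=
  ter h b a a = b /\ forall h', minority_cond K h' -> Sg2 a (ter h' a a b) b.

Inductive reach (A : Type) (E : A -> A -> Prop) : A -> A -> Prop :=
| reach_refl : forall a, reach E a a
| reach_step : forall a b c, E a b -> reach E b c -> reach E a c.

Inductive kind := KS | KAS | KASM.

Definition thin_rel (K : alg -> Prop) (dot : term 'I_2) (h : term 'I_3) (k : kind)
  (A : alg) (a b : A) : Prop :=
  match k with
  | KS => thin_s dot a b
  | KAS => thin_s dot a b \/ thin_a K h a b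
  | KASM => [\/ thin_s dot a b, thin_a K h a b | thin_m K a b]
  end.

Definition le_kind K dot h k (A : alg) : A -> A -> Prop := reach (@thin_rel K dot h k A).

(* maximal (k = KS), as-maximal (KAS), u-maximal (KASM) elements *)
Definition kmaximal K dot h k (A : alg) (a : A) : Prop :=
  forall b, le_kind K dot h k a b -> le_kind K dot h k b a.

Definition kcomponent K dot h k (A : alg) (B : {set A}) : Prop :=
  exists a : A, kmaximal K dot h k a /\
    forall b, b \in B <-> (le_kind K dot h k a b /\ le_kind K dot h k b a).

End Alg.

(* Main.v *)
Require Import Defs.
From mathcomp Require Import all_boot all_order all_algebra.
From Stdlib Require Import FunctionalExtensionality.
Set Implicit Arguments. Unset Strict Implicit. Unset Printing Implicit Defensive.

Section Gen.
Variable L : signature.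

Lemma teval_ext (A : alg L) V (e e' : V -> A) t :
  (forall v, e v = e' v) -> teval e t = teval e' t.
Proof. by move=> H; rewrite (functional_extensionality _ _ H). Qed.

Lemma hom_teval (A B : alg L) (phi : A -> B) (Hp : Defs.hom phi) V (e : V -> A) t :
  phi (teval e t) = teval (fun v => phi (e v)) t.
Proof.
elim: t => [v|f ts IH] //=.
rewrite Hp; f_equal; apply: functional_extensionality => i; exact: IH.
Qed.

Lemma ter_hom (A B : alg L) (phi : A -> B) (Hp : Defs.hom phi) t x y z :
  phi (ter t x y z) = ter t (phi x) (phi y) (phi z).
Proof.
rewrite /ter (hom_teval Hp); apply: teval_ext => -[[|[|[|i]]] Hi] //=.
Qed.

Lemma bin_hom (A B : alg L) (phi : A -> B) (Hp : Defs.hom phi) t x y :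
  phi (bin t x y) = bin t (phi x) (phi y).
Proof.
rewrite /bin (hom_teval Hp); apply: teval_ext => -[[|i] Hi] //=.
Qed.

Lemma closed_teval (A : alg L) (P : A -> Prop) V (e : V -> A) t :
  closedP P -> (forall v, P (e v)) -> P (teval e t).
Proof. move=> HP He; elim: t => [v|f ts IH] //=; exact: HP. Qed.

Lemma closed_ter (A : alg L) (P : A -> Prop) t x y z :
  closedP P -> P x -> P y -> P z -> P (ter t x y z).
Proof. move=> HP Px Py Pz; apply: closed_teval => // -[[|[|[|i]]] Hi] //=. Qed.

Lemma closed_bin (A : alg L) (P : A -> Prop) t x y :
  closedP P -> P x -> P y -> P (bin t x y).
Proof. move=> HP Px Py; apply: closed_teval => // -[[|i] Hi] //=. Qed.

Lemma Sg2_hom (A B : alg L) (phi : A -> B) (Hp : Defs.hom phi) a b x :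
  Sg2 a b x -> Sg2 (phi a) (phi b) (phi x).
Proof.
move=> Hx S HS Hg.
have HS' : subuniv [set u | phi u \in S].
  move=> f y Hy; rewrite inE Hp; apply: HS => i; move: (Hy i); by rewrite inE.
have := Hx _ HS'; rewrite inE; apply => y [->|->]; rewrite inE; apply: Hg; by [left|right].
Qed.

Lemma Sg2_emb (A B : alg L) (phi : A -> B) (Hp : Defs.hom phi) (P : pred A) a b x :
  closedP (fun u => P u) -> {in P &, injective phi} -> P a -> P b -> P x ->
  Sg2 (phi a) (phi b) (phi x) -> Sg2 a b x.
Proof.
move=> HP Hinj Pa Pb Px Hx S HS Hg.
pose T := [set y : B | [exists q, [&& q \in S, P q & phi q == y]]].
have HT : subuniv T.
  move=> f y Hy.
  pose q i := odflt a [pick u | [&& u \in S, P u & phi u == y i]].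
  have Hq : forall i, [&& q i \in S, P (q i) & phi (q i) == y i].
    move=> i; rewrite /q; case: pickP => [u Hu|H0] //=.
    move: (Hy i); rewrite inE => /existsP [u Hu]; by rewrite H0 in Hu.
  rewrite inE; apply/existsP; exists (@op L A f q).
  apply/and3P; split.
  - apply: HS => i; by case/and3P: (Hq i).
  - apply: HP => i; by case/and3P: (Hq i).
  - rewrite Hp; apply/eqP; f_equal; apply: functional_extensionality => i.
    by case/and3P: (Hq i) => _ _ /eqP.
have Hx' : phi x \in T.
  apply: (Hx _ HT) => y [->|->]; rewrite inE; apply/existsP;
    [exists a | exists b]; apply/and3P; split => //; apply: Hg; by [left|right].
move: Hx'; rewrite inE => /existsP [q /and3P [qS Pq /eqP Eq]].
by rewrite -(Hinj _ _ Pq Px Eq).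
Qed.

Lemma thin_hom K dot h k (A B : alg L) (phi : A -> B) (Hp : Defs.hom phi) a b :
  thin_rel K dot h k a b -> thin_rel K dot h k (phi a) (phi b).
Proof.
have Hs : thin_s dot a b -> thin_s dot (phi a) (phi b).
  by case=> H1 H2; split; rewrite -(bin_hom Hp) ?H1 ?H2.
have Ha : thin_a K h a b -> thin_a K h (phi a) (phi b).
  case=> H1 H2; split; first by rewrite -(ter_hom Hp) H1.
  move=> h' Hh'; rewrite -(ter_hom Hp); exact: Sg2_hom (H2 _ Hh').
have Hm : thin_m K a b -> thin_m K (phi a) (phi b).
  move=> H g Hg; case: (H g Hg) => X Y Z.
  split; rewrite -(ter_hom Hp); exact: Sg2_hom.
case: k => /=; first exact: Hs.
  by case=> H; [left; apply: Hs | right; apply: Ha].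
by case=> H; [apply: Or31; apply: Hs | apply: Or32; apply: Ha | apply: Or33; apply: Hm].
Qed.

Lemma thin_emb K dot h k (A B : alg L) (phi : A -> B) (Hp : Defs.hom phi) (P : pred A) a b :
  closedP (fun u => P u) -> {in P &, injective phi} -> P a -> P b ->
  thin_rel K dot h k (phi a) (phi b) -> thin_rel K dot h k a b.
Proof.
move=> HP Hinj Pa Pb.
have Hs : thin_s dot (phi a) (phi b) -> thin_s dot a b.
  have Pab : P (bin dot a b) := @closed_bin A (fun u => P u) dot a b HP Pa Pb.
  have Pba : P (bin dot b a) := @closed_bin A (fun u => P u) dot b a HP Pb Pa.
  case=> H1 H2; split; [apply: (Hinj _ _ Pab Pb) | apply: (Hinj _ _ Pba Pb)];
    by rewrite (bin_hom Hp).
have Ha : thin_a K h (phi a) (phi b) -> thin_a K h a b.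
  case=> H1 H2; split.
    have Pt : P (ter h b a a) := @closed_ter A (fun u => P u) h b a a HP Pb Pa Pa.
    apply: (Hinj _ _ Pt Pb); by rewrite (ter_hom Hp).
  move=> h' Hh'; apply: (Sg2_emb Hp HP Hinj) => //; first exact: (@closed_ter A (fun u => P u)).
  rewrite (ter_hom Hp); exact: H2.
have Hm : thin_m K (phi a) (phi b) -> thin_m K a b.
  move=> H g Hg; case: (H g Hg) => X Y Z.
  split; apply: (Sg2_emb Hp HP Hinj) => //; rewrite ?(ter_hom Hp) //; exact: (@closed_ter A (fun u => P u)).
case: k => /=; first exact: Hs.
  by case=> H; [left; apply: Hs | right; apply: Ha].
by case=> H; [apply: Or31; apply: Hs | apply: Or32; apply: Ha | apply: Or33; apply: Hm].
Qed.

Lemma reach_trans T (E : T -> T -> Prop) a b c : reach E a b -> reach E b c -> reach E a c.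
Proof. elim=> // x y z Hxy _ IH Hzc; exact: reach_step Hxy (IH Hzc). Qed.

Lemma le_hom K dot h k (A B : alg L) (phi : A -> B) (Hp : Defs.hom phi) a b :
  le_kind K dot h k a b -> le_kind K dot h k (phi a) (phi b).
Proof.
elim=> [x|x y z Hxy _ IH]; first exact: reach_refl.
exact: reach_step (thin_hom Hp Hxy) IH.
Qed.
End Gen.

Theorem lemma20 (L : signature) (K : alg L -> Prop)
  (dot : term L 'I_2) (h : term L 'I_3)
  (HK : standing K) (Hdot : dot_term K dot) (Hh : minority_cond K h)
  (k : kind) (A1 A2 : alg L) (HA1 : K A1) (HA2 : K A2)
  (R : {set prod_alg A1 A2}) (HR : subuniv R)
  (HR1 : forall x : A1, exists y : A2, ((x, y) : prod_alg A1 A2) \in R)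
  (HR2 : forall y : A2, exists x : A1, ((x, y) : prod_alg A1 A2) \in R)
  (B : {set A1}) (C : {set A2})
  (HB : kcomponent K dot h k B) (HC : kcomponent K dot h k C)
  (HBC : forall (b : A1) (c : A2), b \in B -> c \in C -> ((b, c) : prod_alg A1 A2) \in R) :
  kcomponent K dot h k
    [set r : subalg HR | ((val r).1 \in B) && ((val r).2 \in C)].
Proof.
case: HK => _ Hst _ _.
have [Hid1 _ _] := Hst _ HA1.
have [Hid2 _ _] := Hst _ HA2.
set Rg := subalg HR.
pose phi1 := fun r : Rg => (val r).1.
pose phi2 := fun r : Rg => (val r).2.
have Hp1 : Defs.hom phi1 by [].
have Hp2 : Defs.hom phi2 by [].
have cl2 : forall c : A2, closedP (fun r : Rg => (fun r : Rg => phi2 r == c) r).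
  move=> c f x Hx /=; apply/eqP.
  transitivity (@op L A2 f (fun _ => c)); last exact: Hid2.
  rewrite /phi2 /=; f_equal; apply: functional_extensionality => i; exact: (eqP (Hx i)).
have cl1 : forall c : A1, closedP (fun r : Rg => (fun r : Rg => phi1 r == c) r).
  move=> c f x Hx /=; apply/eqP.
  transitivity (@op L A1 f (fun _ => c)); last exact: Hid1.
  rewrite /phi1 /=; f_equal; apply: functional_extensionality => i; exact: (eqP (Hx i)).
have inj1 : forall c : A2, {in (fun r : Rg => phi2 r == c) &, injective phi1}.
  move=> c r s /eqP Hr /eqP Hs E; apply: val_inj; apply: injective_projections => //.
  by move: Hr Hs; rewrite /phi2 => -> ->.
have inj2 : forall c : A1, {in (fun r : Rg => phi1 r == c) &, injective phi2}.
  move=> c r s /eqP Hr /eqP Hs E; apply: val_inj; apply: injective_projections => //.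
  by move: Hr Hs; rewrite /phi1 => -> ->.
case: HB => b0 [Mb0 HBm].
case: HC => c0 [Mc0 HCm].
have lift1 : forall (c : A2) (x y : A1), c \in C -> le_kind K dot h k x y -> x \in B -> y \in B ->
    forall r s : Rg, val r = (x, c) -> val s = (y, c) -> le_kind K dot h k r s.
  move=> c x y Hc; elim => [x0|x0 z y0 Hxz Hzy IH] Hx Hy r s Er Es.
    have -> : r = s by apply: val_inj; rewrite Er Es.
    exact: reach_refl.
  have Hz : z \in B.
    apply/HBm; split.
      exact: reach_trans (proj1 ((HBm x0).1 Hx)) (reach_step Hxz (reach_refl _ _)).
    exact: reach_trans Hzy (proj2 ((HBm y0).1 Hy)).
  pose m := (exist _ ((z, c) : prod_alg A1 A2) (HBC _ _ Hz Hc) : Rg).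
  apply: (reach_step _ (IH Hz Hy m s erefl Es)).
  apply: (thin_emb Hp1 (cl2 c) (inj1 c)); rewrite /phi1 /phi2 ?Er //=.
have lift2 : forall (c : A1) (x y : A2), c \in B -> le_kind K dot h k x y -> x \in C -> y \in C ->
    forall r s : Rg, val r = (c, x) -> val s = (c, y) -> le_kind K dot h k r s.
  move=> c x y Hc; elim => [x0|x0 z y0 Hxz Hzy IH] Hx Hy r s Er Es.
    have -> : r = s by apply: val_inj; rewrite Er Es.
    exact: reach_refl.
  have Hz : z \in C.
    apply/HCm; split.
      exact: reach_trans (proj1 ((HCm x0).1 Hx)) (reach_step Hxz (reach_refl _ _)).
    exact: reach_trans Hzy (proj2 ((HCm y0).1 Hy)).
  pose m := (exist _ ((c, z) : prod_alg A1 A2) (HBC _ _ Hc Hz) : Rg).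
  apply: (reach_step _ (IH Hz Hy m s erefl Es)).
  apply: (thin_emb Hp2 (cl1 c) (inj2 c)); rewrite /phi1 /phi2 ?Er //=.
have b0B : b0 \in B by apply/HBm; split; apply: reach_refl.
have c0C : c0 \in C by apply/HCm; split; apply: reach_refl.
pose a := (exist _ ((b0, c0) : prod_alg A1 A2) (HBC _ _ b0B c0C) : Rg).
have both : forall r : Rg, (val r).1 \in B -> (val r).2 \in C ->
    le_kind K dot h k a r /\ le_kind K dot h k r a.
  move=> r H1 H2.
  pose m := (exist _ (((val r).1, c0) : prod_alg A1 A2) (HBC _ _ H1 c0C) : Rg).
  have Er : val r = ((val r).1, (val r).2) by case: (val r).
  split.
    apply: reach_trans (lift1 c0 b0 (val r).1 c0C (proj1 ((HBm _).1 H1)) b0B H1 a m erefl erefl) _.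
    exact: (lift2 (val r).1 c0 (val r).2 H1 (proj1 ((HCm _).1 H2)) c0C H2 m r erefl Er).
  apply: reach_trans (lift2 (val r).1 (val r).2 c0 H1 (proj2 ((HCm _).1 H2)) H2 c0C r m Er erefl) _.
  exact: (lift1 c0 (val r).1 b0 c0C (proj2 ((HBm _).1 H1)) H1 b0B m a erefl erefl).
exists a; split.
  move=> s Has.
  have H1 : (val s).1 \in B.
    apply/HBm; split; first exact: (le_hom Hp1 Has).
    exact: Mb0 (le_hom Hp1 Has).
  have H2 : (val s).2 \in C.
    apply/HCm; split; first exact: (le_hom Hp2 Has).
    exact: Mc0 (le_hom Hp2 Has).
  exact: (proj2 (both s H1 H2)).
move=> r; rewrite inE; split.
  by case/andP => H1 H2; apply: both.
case=> Har Hra; apply/andP; split.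
  by apply/HBm; split; [exact: (le_hom Hp1 Har) | exact: (le_hom Hp1 Hra)].
by apply/HCm; split; [exact: (le_hom Hp2 Har) | exact: (le_hom Hp2 Hra)].
Qed.
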